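(* Consider the convex problem of minimizing $F(\beta)=(n^{(0)})^{-1/2}\sum_{t=1}^k\|Y^{(t)}-\mathbf X^{(t)}\beta^{(t)}\|+\lambda\sum_{l=1}^p\|\beta_{(l)}\|$ over $\beta\in\mathbb R^{pk}$, solved by the scaled iterative thresholding algorithm described in the context with rescaling constant $K_0>0$. Assume $\lambda>0$ and $\min_{1\le t\le k}\inf_{\zeta\in A^t}\|\mathbf X^{(t)}\zeta-Y^{(t)}\|>c_0$ for some constant $c_0>0$, where $A^t=\{v\beta(m)^{(t)}+(1-v)\beta(m+1)^{(t)}:v\in[0,1],\ m=0,1,\dots\}$. Then for large enough $K_0$, the sequence of iterates $\beta(m)$ converges to the global optimum (a global minimizer) of the problem.
   Context: Data: for $t=1,\dots,k$, $Y^{(t)}\in\mathbb R^{n^{(t)}}$ and $\mathbf X^{(t)}\in\mathbb R^{n^{(t)}\times p}$; $n^{(0)}=\min_tn^{(t)}$. For $\beta=(\beta^{(1)\prime},\dots,\beta^{(k)\prime})'\in\mathbb R^{pk}$ with $\beta^{(t)}\in\mathbb R^p$, $\beta_{(l)}=(\beta^{(1)}_l,\dots,\beta^{(k)}_l)'\in\mathbb R^k$. $\|\cdot\|$ is the Euclidean norm. Algorithm: Step 1 (rescaling): replace $Y^{(t)}$ by $Y^{(t)}/K_0$, $\mathbf X^{(t)}$ by $\mathbf X^{(t)}/K_0$ for all $t$, and $\lambda$ by $\lambda/K_0$ (this does not change the minimizer); below $Y^{(t)},\mathbf X^{(t)},\lambda$ denote the rescaled quantities. Step 2 (iteration): from an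 initial $\beta(0)\in\mathbb R^{pk}$, given $\beta(m)$ define $R(m)^{(t)}=(\mathbf X^{(t)})'(\mathbf X^{(t)}\beta(m)^{(t)}-Y^{(t)})/[(n^{(0)})^{1/2}\|\mathbf X^{(t)}\beta(m)^{(t)}-Y^{(t)}\|]\in\mathbb R^p$, stack them into $R(m)\in\mathbb R^{pk}$ with groups $R(m)_{(l)}\in\mathbb R^k$ as for $\beta$, let $A(m)=\sum_{t=1}^k[(n^{(0)})^{1/2}\|\mathbf X^{(t)}\beta(m)^{(t)}-Y^{(t)}\|]^{-1}$, and set $\beta(m+1)_{(l)}=\vec\Theta\big(\beta(m)_{(l)}-R(m)_{(l)}/A(m);\lambda/A(m)\big)$ for $l=1,\dots,p$, where $\vec\Theta(0;\lambda)=0$ and $\vec\Theta(a;\lambda)=a\,(\|a\|-\lambda)_+/\|a\|$ for $a\ne0$ (multivariate soft-thresholding). *)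

(* Defs.v *)
From HB Require Import structures.
From mathcomp Require Import all_boot all_order all_algebra.
From mathcomp Require Import all_classical all_reals all_analysis.
Set Implicit Arguments.
Unset Strict Implicit.
Unset Printing Implicit Defensive.
Import Order.TTheory GRing.Theory Num.Theory.
Local Open Scope ring_scope.

(* A coefficient vector beta in R^{pk}
   is stored as a matrix B : 'M_(p, k):  column t is beta^{(t)} in R^p,
   row l is beta_{(l)} in R^k. *)

Definition nmax (k : nat) (n : 'I_k -> nat) : nat := \big[maxn/0%N]_(t < k) n t.
Definition n0 (k : nat) (n : 'I_k -> nat) : nat :=
  \big[minn/(nmax n)]_(t < k) n t.

Definition cnorm (R : realType) (m : nat) (v : 'cV[R]_m) : R :=
  Num.sqrt (\sum_(i < m) v i 0 ^+ 2).
Definition rnorm (R : realType) (m : nat) (v : 'rV[R]_m) : R :=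
  Num.sqrt (\sum_(j < m) v 0 j ^+ 2).

Definition objF (R : realType) (k p : nat) (n : 'I_k -> nat)
  (X : forall t : 'I_k, 'M[R]_(n t, p)) (Y : forall t : 'I_k, 'cV[R]_(n t))
  (lam : R) (B : 'M[R]_(p, k)) : R :=
  (Num.sqrt ((n0 n)%:R))^-1 * (\sum_(t < k) cnorm (Y t - X t *m col t B))
  + lam * (\sum_(l < p) rnorm (row l B)).

Definition soft_thr (R : realType) (m : nat) (a : 'rV[R]_m) (lam : R) : 'rV[R]_m :=
  if a == 0 then 0 else (Num.max (rnorm a - lam) 0 / rnorm a) *: a.

Section Iteration.
Variables (R : realType) (k p : nat) (n : 'I_k -> nat)
  (X : forall t : 'I_k, 'M[R]_(n t, p)) (Y : forall t : 'I_k, 'cV[R]_(n t))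
  (lam : R).

Definition rden (B : 'M[R]_(p, k)) (t : 'I_k) : R :=
  Num.sqrt ((n0 n)%:R) * cnorm (X t *m col t B - Y t).

Definition Rmat (B : 'M[R]_(p, k)) : 'M[R]_(p, k) :=
  \matrix_(l < p, t < k)
    ((rden B t)^-1 *: ((X t)^T *m (X t *m col t B - Y t))) l 0.

Definition Acoef (B : 'M[R]_(p, k)) : R := \sum_(t < k) (rden B t)^-1.

Definition ist_step (B : 'M[R]_(p, k)) : 'M[R]_(p, k) :=
  \matrix_(l < p, t < k)
    (soft_thr (row l B - (Acoef B)^-1 *: row l (Rmat B)) (lam / Acoef B)) 0 t.

End Iteration.

Definition scaled_iterates (R : realType) (k p : nat) (n : 'I_k -> nat)
  (X : forall t : 'I_k, 'M[R]_(n t, p)) (Y : forall t : 'I_k, 'cV[R]_(n t))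
  (lam K0 : R) (B0 : 'M[R]_(p, k)) (m : nat) : 'M[R]_(p, k) :=
  iter m (ist_step (fun t => K0^-1 *: X t) (fun t => K0^-1 *: Y t) (lam / K0)) B0.

(* Main.v *)
Require Import Defs.
From HB Require Import structures.
From mathcomp Require Import all_boot all_order all_algebra.
From mathcomp Require Import all_classical all_reals all_analysis.
From mathcomp Require Import ring lra.
Import Order.TTheory GRing.Theory Num.Theory numFieldNormedType.Exports.
Local Open Scope ring_scope.
Set Implicit Arguments.
Unset Strict Implicit.

Section Gen.
Variable R : realType.
Variable I : finType.
Implicit Types f g : I -> R.

Definition nrm f : R := Num.sqrt (\sum_i f i ^+ 2).
Definition dt f g : R := \sum_i f i * g i.

Lemma sumsq_ge0 f : 0 <= \sum_i f i ^+ 2.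
Proof. by apply: sumr_ge0 => i _; exact: sqr_ge0. Qed.

Lemma nrm_ge0 f : 0 <= nrm f.
Proof. exact: sqrtr_ge0. Qed.

Lemma nrm_sq f : nrm f ^+ 2 = \sum_i f i ^+ 2.
Proof. by rewrite sqr_sqrtr // sumsq_ge0. Qed.

Lemma sumsq_eq0 f : \sum_i f i ^+ 2 = 0 -> forall i, f i = 0.
Proof.
move=> h i; apply/eqP; rewrite -sqrf_eq0; apply/eqP.
move: (psumr_eq0P (fun j (_ : true) => sqr_ge0 (f j)) h) => H; exact: H.
Qed.

Lemma CS2 f g : dt f g ^+ 2 <= (\sum_i f i ^+ 2) * (\sum_i g i ^+ 2).
Proof.
set A := \sum_i f i ^+ 2; set B := \sum_i g i ^+ 2; set C := dt f g.
have HA : 0 <= A by apply: sumsq_ge0.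
have key : 0 <= A * (A * B - C ^+ 2).
  have -> : A * (A * B - C ^+ 2) = \sum_i (A * g i - C * f i) ^+ 2.
    transitivity (\sum_i (A ^+ 2 * g i ^+ 2 - (2 * A * C) * (f i * g i) + C ^+ 2 * f i ^+ 2)).
      rewrite big_split /= sumrB -!mulr_sumr /= -/A -/B. rewrite -/(dt f g) -/C. ring.
    by apply: eq_bigr => i _; ring.
  by apply: sumsq_ge0.
have [A0|Apos] := eqVneq A 0.
  have f0 := @sumsq_eq0 f A0.
  have -> : C = 0 by rewrite /C /dt big1 // => i _; rewrite f0 mul0r.
  by rewrite expr0n /= mulr_ge0 ?sumsq_ge0.
have Ap : 0 < A by rewrite lt_def Apos HA.
by rewrite pmulr_rge0 // subr_ge0 in key.
Qed.

Lemma CS f g : dt f g <= nrm f * nrm g.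
Proof.
apply: le_trans (ler_norm _) _.
rewrite -sqrtr_sqr /nrm -sqrtrM ?sumsq_ge0 // ler_sqrt ?mulr_ge0 ?sumsq_ge0 //.
exact: CS2.
Qed.

Lemma sq_le_nonneg (x y : R) : 0 <= y -> x ^+ 2 <= y ^+ 2 -> x <= y.
Proof. by move=> y0 h; apply: le_trans (ler_norm x) _; rewrite -sqrtr_sqr -(ger0_norm y0) -(sqrtr_sqr y) ler_sqrt ?sqr_ge0. Qed.

Lemma sumsq_add f g : \sum_i (f i + g i) ^+ 2 = \sum_i f i ^+ 2 + 2 * dt f g + \sum_i g i ^+ 2.
Proof.
rewrite /dt mulr_sumr -!big_split /=; apply: eq_bigr => i _; ring.
Qed.

Lemma nrm_triangle f g : nrm (fun i => f i + g i) <= nrm f + nrm g.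
Proof.
apply: sq_le_nonneg; first by rewrite addr_ge0 ?nrm_ge0.
rewrite nrm_sq sumsq_add sqrrD !nrm_sq.
have := CS f g; lra.
Qed.

Lemma nrm_scale c f : nrm (fun i => c * f i) = `|c| * nrm f.
Proof.
rewrite /nrm (eq_bigr (fun i => c ^+ 2 * f i ^+ 2)); last by move=> i _; rewrite exprMn.
by rewrite -mulr_sumr sqrtrM ?sqr_ge0 // sqrtr_sqr.
Qed.

Lemma nrm_entry f i : `|f i| <= nrm f.
Proof.
rewrite -sqrtr_sqr ler_sqrt ?sumsq_ge0 //.
by rewrite (bigD1 i) //= lerDl sumr_ge0 // => j _; apply: sqr_ge0.
Qed.

Lemma nrm_bound f d : 0 <= d -> (forall i, `|f i| <= d) -> nrm f <= (#|I|%:R + 1) * d.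
Proof.
move=> d0 h.
have s : \sum_i f i ^+ 2 <= #|I|%:R * d ^+ 2.
  rewrite -sum1_card natr_sum mulr_suml; apply: ler_sum => i _.
  by rewrite mul1r -real_normK ?num_real // lerXn2r ?nnegrE // normr_ge0.
apply: sq_le_nonneg; first by rewrite mulr_ge0 ?addr_ge0.
rewrite nrm_sq (le_trans s) // exprMn ler_wpM2r ?sqr_ge0 //.
have : 0 <= #|I|%:R :> R by [].
set N := (#|I|%:R : R); nra.
Qed.

Lemma nrm_add_sq f g : nrm (fun i => f i + g i) ^+ 2 = nrm f ^+ 2 + 2 * dt f g + \sum_i g i ^+ 2.
Proof. by rewrite !nrm_sq sumsq_add. Qed.

Lemma maj_lemma f g : 0 < nrm f ->
  nrm (fun i => f i + g i) <= nrm f + dt f g / nrm f + (\sum_i g i ^+ 2) / (2 * nrm f).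
Proof.
move=> a0; have e := nrm_add_sq f g.
set a := nrm f in a0 e *; set b := nrm (fun i => f i + g i) in e *.
set c := dt f g in e *; set w := \sum_i g i ^+ 2 in e *.
have -> : w = b ^+ 2 - a ^+ 2 - 2 * c by rewrite e; ring.
have an : a != 0 by rewrite gt_eqF.
suff : 0 <= a + c / a + (b ^+ 2 - a ^+ 2 - 2 * c) / (2 * a) - b by rewrite subr_ge0.
have -> : a + c / a + (b ^+ 2 - a ^+ 2 - 2 * c) / (2 * a) - b = (a - b) ^+ 2 / (2 * a).
  by field; rewrite an.
by rewrite divr_ge0 ?sqr_ge0 // mulr_ge0 // ltW.
Qed.

Lemma cvx_lemma f g : 0 < nrm f ->
  nrm f + dt f g / nrm f <= nrm (fun i => f i + g i).
Proof.
move=> a0.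
have h := CS f (fun i => f i + g i).
have e : dt f (fun i => f i + g i) = nrm f ^+ 2 + dt f g.
  rewrite nrm_sq /dt -big_split /=; apply: eq_bigr => i _; ring.
rewrite e in h.
rewrite -(ler_pM2l a0) mulrDr mulrCA divff ?gt_eqF // mulr1.
by rewrite -expr2.
Qed.

End Gen.


Section Prox.
Variable R : realType.

Lemma rnormE (k : nat) (v : 'rV[R]_k) : rnorm v = nrm (fun j => v 0 j).
Proof. by []. Qed.
Lemma cnormE (k : nat) (v : 'cV[R]_k) : cnorm v = nrm (fun j => v j 0).
Proof. by []. Qed.

Lemma prox_ineq (k : nat) (a z : 'rV[R]_k) mu : 0 <= mu ->
  \sum_j (z 0 j - (soft_thr a mu) 0 j) * (a 0 j - (soft_thr a mu) 0 j)
    <= mu * rnorm z - mu * rnorm (soft_thr a mu).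
Proof.
move=> mu0; rewrite /soft_thr; case: eqP => [->|an].
  rewrite big1 => [|j _]; last by rewrite !mxE; ring.
  have -> : rnorm (0 : 'rV[R]_k) = 0.
    by rewrite /rnorm big1 ?sqrtr0 // => j _; rewrite mxE expr0n.
  by rewrite mulr0 subr0 mulr_ge0 // nrm_ge0.
have rpos : 0 < rnorm a.
  rewrite lt_def sqrtr_ge0 andbT; apply/negP => /eqP h; apply: an.
  have h2 : \sum_j a 0 j ^+ 2 = 0.
    by rewrite -(@nrm_sq R _ (fun j => a 0 j)) -rnormE h expr0n.
  apply/rowP => j; rewrite mxE (@sumsq_eq0 R _ (fun j => a 0 j) h2 j) //.
set r := rnorm a in rpos *.
have hcs := CS (fun j => z 0 j) (fun j => a 0 j); rewrite -!rnormE -/r in hcs.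
case: (lerP (r - mu) 0) => hm.
  rewrite mul0r scale0r.
  have -> : rnorm (0 : 'rV[R]_k) = 0.
    by rewrite /rnorm big1 ?sqrtr0 // => j _; rewrite mxE expr0n.
  rewrite mulr0 subr0.
  have -> : \sum_j (z 0 j - (0 : 'rV[R]_k) 0 j) * (a 0 j - (0 : 'rV[R]_k) 0 j) = dt (fun j => z 0 j) (fun j => a 0 j).
    by apply: eq_bigr => j _; rewrite mxE !subr0.
  apply: le_trans hcs _; rewrite mulrC ler_wpM2r ?nrm_ge0 //; lra.

set c := (r - mu) / r.
have c0 : 0 <= c by rewrite divr_ge0 // ltW // subr_gt0.
have -> : rnorm (c *: a) = c * r.
  rewrite rnormE (_ : (fun j => (c *: a) 0 j) = (fun j => c * a 0 j)); last by apply: funext => j; rewrite mxE.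
  by rewrite nrm_scale ger0_norm.
have -> : \sum_j (z 0 j - (c *: a) 0 j) * (a 0 j - (c *: a) 0 j) =
     (1 - c) * dt (fun j => z 0 j) (fun j => a 0 j) - (1 - c) * c * (\sum_j a 0 j ^+ 2).
  rewrite /dt !mulr_sumr -sumrB; apply: eq_bigr => j _; rewrite mxE; ring.
rewrite -(@nrm_sq R _ (fun j => a 0 j)) -rnormE -/r.
have e : 1 - c = mu / r by rewrite /c; field; rewrite gt_eqF.
rewrite e.
have : mu / r * dt (fun j => z 0 j) (fun j => a 0 j) <= mu / r * (rnorm z * r).
  by rewrite ler_wpM2l // divr_ge0 // ltW.
have -> : mu / r * (rnorm z * r) = mu * rnorm z by field; rewrite gt_eqF.
have -> : mu / r * c * r ^+ 2 = mu * (c * r) by field; rewrite gt_eqF.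
lra.
Qed.

End Prox.


Section PerT.
Variable R : realType.

Lemma lin_bound (m p : nat) (Xt : 'M[R]_(m,p)) (d : 'I_p -> R) :
  \sum_i (\sum_l Xt i l * d l) ^+ 2 <= (\sum_i \sum_l Xt i l ^+ 2) * \sum_l d l ^+ 2.
Proof.
rewrite mulr_suml; apply: ler_sum => i _.
exact: (CS2 (fun l => Xt i l) d).
Qed.

Lemma per_t (m p : nat) (Xt : 'M[R]_(m,p)) (Yt : 'cV[R]_m) (b z : 'I_p -> R) (s A : R) :
  let u := fun i => \sum_l Xt i l * b l - Yt i 0 in
  let w := fun i => \sum_l Xt i l * (z l - b l) in
  let g := fun l => (s * nrm u)^-1 * \sum_i Xt i l * u i in
  0 < s -> 0 < nrm u -> (s * nrm u)^-1 <= A -> \sum_i \sum_l Xt i l ^+ 2 <= 1 ->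
  s^-1 * nrm (fun i => u i + w i) <= s^-1 * nrm u + \sum_l g l * (z l - b l)
                                      + A / 2 * \sum_l (z l - b l) ^+ 2
  /\ s^-1 * nrm u + \sum_l g l * (z l - b l) <= s^-1 * nrm (fun i => u i + w i).
Proof.
move=> u w g s0 u0 hA hX.
have eg : \sum_l g l * (z l - b l) = (s * nrm u)^-1 * dt u w.
  rewrite /g /dt /w.
  under eq_bigr do rewrite -mulrA.
  rewrite -mulr_sumr; congr (_ * _).
  under eq_bigr do rewrite mulr_suml.
  rewrite exchange_big /=; apply: eq_bigr => i _.
  rewrite mulr_sumr; apply: eq_bigr => l _; ring.
rewrite eg.
have sn : s != 0 by rewrite gt_eqF.
have un : nrm u != 0 by rewrite gt_eqF.
have einv : (s * nrm u)^-1 * dt u w = s^-1 * (dt u w / nrm u).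
  by field; rewrite sn un.
split.
  have hm := maj_lemma w u0.
  have hw : \sum_i w i ^+ 2 <= \sum_l (z l - b l) ^+ 2.
    apply: (le_trans (y := (\sum_i \sum_l Xt i l ^+ 2) * \sum_l (z l - b l) ^+ 2)); first by have /= H := lin_bound Xt (fun l => z l - b l); rewrite /w; exact: H.
    by rewrite ler_piMl ?sumr_ge0 // => l _; apply: sqr_ge0.
  have sinv : 0 < s^-1 by rewrite invr_gt0.
  have h1 : s^-1 * nrm (fun i => u i + w i) <=
     s^-1 * (nrm u + dt u w / nrm u + (\sum_i w i ^+ 2) / (2 * nrm u)).
    by rewrite ler_pM2l.
  apply: le_trans h1 _.
  have e2 : s^-1 * (nrm u + dt u w / nrm u + (\sum_i w i ^+ 2) / (2 * nrm u)) =
     s^-1 * nrm u + (s * nrm u)^-1 * dt u w + (s * nrm u)^-1 / 2 * \sum_i w i ^+ 2.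
    by field; rewrite sn un.
  rewrite e2 lerD2l.
  have hpos : 0 <= (s * nrm u)^-1 by rewrite invr_ge0 mulr_ge0 // ltW.
  have hd : 0 <= \sum_l (z l - b l) ^+ 2 by apply: sumr_ge0 => l _; apply: sqr_ge0.
  have hw0 : 0 <= \sum_i w i ^+ 2 by apply: sumr_ge0 => l _; apply: sqr_ge0.
  set P := (s * nrm u)^-1 in hA hpos *.
  set D := \sum_l (z l - b l) ^+ 2 in hw hd *.
  set W := \sum_i w i ^+ 2 in hw hw0 *.
  nra.
have hc := cvx_lemma w u0.
rewrite einv -mulrDr ler_pM2l ?invr_gt0 //.
Qed.

End PerT.


Section Key.
Variables (R : realType) (k p : nat) (n : 'I_k -> nat)
  (X : forall t : 'I_k, 'M[R]_(n t, p)) (Y : forall t : 'I_k, 'cV[R]_(n t))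
  (lam : R).

Definition resid (B : 'M[R]_(p, k)) (t : 'I_k) : 'I_(n t) -> R :=
  fun i => \sum_l X t i l * B l t - Y t i 0.
Arguments resid B t i : clear implicits.

Lemma cnorm_resid B t : cnorm (X t *m col t B - Y t) = nrm (resid B t).
Proof.
rewrite cnormE; congr Num.sqrt; apply: eq_bigr => i _; congr (_ ^+ 2).
rewrite /resid !mxE; congr (_ - _); apply: eq_bigr => l _; rewrite !mxE //.
Qed.

Lemma rden_resid B t : rden X Y B t = Num.sqrt (n0 n)%:R * nrm (resid B t).
Proof. by rewrite /rden cnorm_resid. Qed.

Lemma Rmat_E B l t : Rmat X Y B l t =
  (Num.sqrt (n0 n)%:R * nrm (resid B t))^-1 * \sum_i X t i l * resid B t i.
Proof.
rewrite /Rmat !mxE rden_resid; congr (_ * _).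
apply: eq_bigr => i _; rewrite !mxE; congr (_ * _).
rewrite /resid; congr (_ - _); apply: eq_bigr => l' _; rewrite !mxE //.
Qed.

Lemma cnorm_Z B Z t : cnorm (Y t - X t *m col t Z) =
  nrm (fun i => resid B t i + \sum_l X t i l * (Z l t - B l t)).
Proof.
rewrite cnormE; congr Num.sqrt; apply: eq_bigr => i _.
rewrite -sqrrN; congr (_ ^+ 2).
rewrite /resid !mxE.
have -> : \sum_l X t i l * (Z l t - B l t) = \sum_l X t i l * Z l t - \sum_l X t i l * B l t.
  by rewrite -sumrB; apply: eq_bigr => l _; ring.
rewrite (_ : \sum_j X t i j * col t Z j 0 = \sum_l X t i l * Z l t); last first.
  by apply: eq_bigr => l _; rewrite !mxE.
ring.
Qed.

Lemma dsumD (F G : 'I_k -> 'I_p -> R) :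
  \sum_t \sum_l F t l + \sum_t \sum_l G t l = \sum_t \sum_l (F t l + G t l).
Proof. by rewrite -big_split; apply: eq_bigr => t _; rewrite -big_split. Qed.
Lemma dsumB (F G : 'I_k -> 'I_p -> R) :
  \sum_t \sum_l F t l - \sum_t \sum_l G t l = \sum_t \sum_l (F t l - G t l).
Proof. by rewrite -sumrB; apply: eq_bigr => t _; rewrite -sumrB. Qed.
Lemma dsumZ c (F : 'I_k -> 'I_p -> R) :
  c * \sum_t \sum_l F t l = \sum_t \sum_l (c * F t l).
Proof. by rewrite mulr_sumr; apply: eq_bigr => t _; rewrite mulr_sumr. Qed.

Lemma row_entry (M : 'M[R]_(p, k)) l t : row l M 0 t = M l t.
Proof. by rewrite mxE. Qed.
Lemma rowsub_entry (M N : 'M[R]_(p, k)) c l t : (row l M - c *: row l N) 0 t = M l t - c * N l t.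
Proof. by rewrite !mxE. Qed.

Hypothesis kpos : (0 < k)%N.
Hypothesis spos : 0 < Num.sqrt ((n0 n)%:R : R).
Hypothesis lam0 : 0 <= lam.
Hypothesis hX : forall t, \sum_i \sum_l X t i l ^+ 2 <= 1.

Lemma key_ineq (B Z : 'M[R]_(p, k)) :
  (forall t, 0 < nrm (resid B t)) ->
  objF X Y lam (ist_step X Y lam B)
     + Acoef X Y B / 2 * \sum_t \sum_l (Z l t - ist_step X Y lam B l t) ^+ 2
  <= objF X Y lam Z + Acoef X Y B / 2 * \sum_t \sum_l (Z l t - B l t) ^+ 2.
Proof.
move=> hres.
set s := Num.sqrt ((n0 n)%:R : R).
have sp : 0 < s := spos.
set A := Acoef X Y B.
set Bp := ist_step X Y lam B.
set Rm := Rmat X Y B.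
have rdpos t : 0 < rden X Y B t by rewrite rden_resid mulr_gt0.
have hAt t : (s * nrm (resid B t))^-1 <= A.
  rewrite -rden_resid /A /Acoef (bigD1 t) //= lerDl sumr_ge0 // => t' _.
  by rewrite invr_ge0 ltW.
have Apos : 0 < A.
  rewrite /A /Acoef (bigD1 (Ordinal kpos)) //= ltr_wpDr ?invr_gt0 //.
  by rewrite sumr_ge0 // => t' _; rewrite invr_ge0 ltW.
have An : A != 0 by rewrite gt_eqF.
have hV : \sum_t \sum_l (Z l t - Bp l t) * (A * (B l t - Bp l t) - Rm l t)
    <= lam * \sum_l rnorm (row l Z) - lam * \sum_l rnorm (row l Bp).
  rewrite exchange_big /= !mulr_sumr -sumrB; apply: ler_sum => l _.
  have rowBp : row l Bp = soft_thr (row l B - A^-1 *: row l Rm) (lam / A).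
    by apply/rowP => j; rewrite /Bp /ist_step !mxE.
  have := prox_ineq (row l B - A^-1 *: row l Rm) (row l Z) (divr_ge0 lam0 (ltW Apos)).
  rewrite -rowBp => h.
  have -> : lam * rnorm (row l Z) - lam * rnorm (row l Bp) =
      A * (lam / A * rnorm (row l Z) - lam / A * rnorm (row l Bp)) by field.
  have : A * \sum_j (row l Z 0 j - row l Bp 0 j) * ((row l B - A^-1 *: row l Rm) 0 j - row l Bp 0 j)
     <= A * (lam / A * rnorm (row l Z) - lam / A * rnorm (row l Bp)).
    by rewrite ler_pM2l.
  apply: le_trans; rewrite le_eqVlt; apply/orP; left; apply/eqP.
  rewrite mulr_sumr; apply: eq_bigr => t _; rewrite !row_entry rowsub_entry.
  by field.
have hPT (Z' : 'M[R]_(p, k)) (t0 : 'I_k) :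
   s^-1 * cnorm (Y t0 - X t0 *m col t0 Z') <= s^-1 * nrm (resid B t0)
      + \sum_l Rm l t0 * (Z' l t0 - B l t0) + A / 2 * \sum_l (Z' l t0 - B l t0) ^+ 2
   /\ s^-1 * nrm (resid B t0) + \sum_l Rm l t0 * (Z' l t0 - B l t0)
      <= s^-1 * cnorm (Y t0 - X t0 *m col t0 Z').
  have := @per_t R (n t0) p (X t0) (Y t0) (fun l => B l t0) (fun l => Z' l t0) s A sp (hres t0) (hAt t0) (hX t0).
  rewrite (cnorm_Z B Z' t0).
  have -> : \sum_l Rm l t0 * (Z' l t0 - B l t0) =
     \sum_l (s * nrm (resid B t0))^-1 * (\sum_i X t0 i l * resid B t0 i) * (Z' l t0 - B l t0).
    by apply: eq_bigr => l1 _; rewrite /Rm Rmat_E.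
  done.
have hM : s^-1 * \sum_t cnorm (Y t - X t *m col t Bp) <= s^-1 * \sum_t nrm (resid B t)
    + \sum_t \sum_l Rm l t * (Bp l t - B l t) + A / 2 * \sum_t \sum_l (Bp l t - B l t) ^+ 2.
  rewrite !mulr_sumr -!big_split /=; apply: ler_sum => t _.
  by case: (hPT Bp t).
have hC : s^-1 * \sum_t nrm (resid B t) + \sum_t \sum_l Rm l t * (Z l t - B l t)
    <= s^-1 * \sum_t cnorm (Y t - X t *m col t Z).
  rewrite !mulr_sumr -!big_split /=; apply: ler_sum => t _.
  by case: (hPT Z t).
have hId : \sum_t \sum_l Rm l t * (Bp l t - B l t) + A / 2 * \sum_t \sum_l (Bp l t - B l t) ^+ 2
    - \sum_t \sum_l Rm l t * (Z l t - B l t)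
    - \sum_t \sum_l (Z l t - Bp l t) * (A * (B l t - Bp l t) - Rm l t)
    = A / 2 * \sum_t \sum_l (Z l t - B l t) ^+ 2 - A / 2 * \sum_t \sum_l (Z l t - Bp l t) ^+ 2.
  rewrite !dsumZ !dsumD !dsumB; apply: eq_bigr => t _; apply: eq_bigr => l _.
  by field.
move: hV hM hC hId; rewrite /objF -/s.
set f1 := s^-1 * \sum_t cnorm (Y t - X t *m col t Bp).
set f2 := s^-1 * \sum_t cnorm (Y t - X t *m col t Z).
set f0 := s^-1 * \sum_t nrm (resid B t).
set S1 := \sum_t \sum_l Rm l t * (Bp l t - B l t).
set S2 := A / 2 * \sum_t \sum_l (Bp l t - B l t) ^+ 2.
set S3 := \sum_t \sum_l Rm l t * (Z l t - B l t).
set S4 := \sum_t \sum_l (Z l t - Bp l t) * (A * (B l t - Bp l t) - Rm l t).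
set E0 := A / 2 * \sum_t \sum_l (Z l t - B l t) ^+ 2.
set E1 := A / 2 * \sum_t \sum_l (Z l t - Bp l t) ^+ 2.
set h1 := lam * \sum_l rnorm (row l Bp).
set h2 := lam * \sum_l rnorm (row l Z).
lra.
Qed.

End Key.
Arguments resid {R k p n} X Y B t i.

Local Open Scope classical_set_scope.

Section Aux.
Variable R : realType.

Lemma cnorm_opp (m : nat) (v : 'cV[R]_m) : cnorm (- v) = cnorm v.
Proof. rewrite !cnormE; congr Num.sqrt; apply: eq_bigr => i _; by rewrite mxE sqrrN. Qed.

Lemma cnorm_scale (m : nat) c (v : 'cV[R]_m) : cnorm (c *: v) = `|c| * cnorm v.
Proof.
rewrite !cnormE -nrm_scale; congr Num.sqrt; apply: eq_bigr => i _; by rewrite mxE.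
Qed.

Lemma rnorm_scale (m : nat) c (v : 'rV[R]_m) : rnorm (c *: v) = `|c| * rnorm v.
Proof.
rewrite !rnormE -nrm_scale; congr Num.sqrt; apply: eq_bigr => i _; by rewrite mxE.
Qed.

Lemma cnorm0v (v : 'cV[R]_0) : cnorm v = 0.
Proof. by rewrite /cnorm big_ord0 sqrtr0. Qed.

Lemma eps_le (x y : R) : (forall e, 0 < e -> x <= y + e) -> x <= y.
Proof. by move=> h; apply/ler_addgt0Pr. Qed.

End Aux.

Section Main.
Variables (R : realType) (k p : nat) (n : 'I_k -> nat)
  (X : forall t : 'I_k, 'M[R]_(n t, p)) (Y : forall t : 'I_k, 'cV[R]_(n t))
  (lam K0 c1 : R) (B0 : 'M[R]_(p, k)).
Hypothesis kpos : (0 < k)%N.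
Hypothesis lam0 : 0 < lam.
Hypothesis K01 : 1 <= K0.
Hypothesis hK : \sum_t \sum_i \sum_l X t i l ^+ 2 <= K0.
Hypothesis c1pos : 0 < c1.
Hypothesis hyp : forall t m,
  c1 <= cnorm (X t *m col t (scaled_iterates X Y lam K0 B0 m) - Y t).

Let Xs := fun t => K0^-1 *: X t.
Let Ys := fun t => K0^-1 *: Y t.
Let lams := lam / K0.
Let beta m := scaled_iterates X Y lam K0 B0 m.
Let G := objF Xs Ys lams.
Let s := Num.sqrt ((n0 n)%:R : R).

Lemma K0pos : 0 < K0.
Proof. exact: lt_le_trans ltr01 K01. Qed.

Lemma lams_pos : 0 < lams.
Proof. by rewrite divr_gt0 // K0pos. Qed.

Lemma beta_S m : beta m.+1 = ist_step Xs Ys lams (beta m).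
Proof. by []. Qed.

Lemma hXs t : \sum_i \sum_l Xs t i l ^+ 2 <= 1.
Proof.
have K0p := K0pos.
have e : \sum_i \sum_l Xs t i l ^+ 2 = K0^-2 * \sum_i \sum_l X t i l ^+ 2.
  rewrite mulr_sumr; apply: eq_bigr => i _; rewrite mulr_sumr; apply: eq_bigr => l _.
  by rewrite /Xs mxE exprMn exprVn.
rewrite e.
have ht : \sum_i \sum_l X t i l ^+ 2 <= K0.
  apply: le_trans hK; rewrite (bigD1 t) //= lerDl sumr_ge0 // => t' _.
  by rewrite sumr_ge0 // => i _; rewrite sumr_ge0 // => l _; apply: sqr_ge0.
have h0 : 0 <= \sum_i \sum_l X t i l ^+ 2.
  by rewrite sumr_ge0 // => i _; rewrite sumr_ge0 // => l _; apply: sqr_ge0.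
rewrite mulrC -ler_pdivlMr ?invr_gt0 ?exprn_gt0 // div1r invrK expr2.
have hh : 0 <= (K0 - 1) * K0 by rewrite mulr_ge0 ?subr_ge0 // ltW.
set S := \sum_i \sum_l X t i l ^+ 2 in ht h0 *; nra.
Qed.

Lemma resid_scale B t i : resid Xs Ys B t i = K0^-1 * resid X Y B t i.
Proof.
rewrite /resid mulrBr mulr_sumr /Ys /Xs mxE; congr (_ - _).
by apply: eq_bigr => l _; rewrite mxE mulrA.
Qed.

Lemma nrm_resid_scale B t : nrm (resid Xs Ys B t) = K0^-1 * nrm (resid X Y B t).
Proof.
have ki : 0 <= K0^-1 by rewrite invr_ge0 ltW // K0pos.
rewrite -(ger0_norm ki) -nrm_scale.
by congr Num.sqrt; apply: eq_bigr => i _; rewrite resid_scale.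
Qed.

Lemma cnorm_pos_dim (m : nat) (v : 'cV[R]_m) : 0 < cnorm v -> (0 < m)%N.
Proof. by case: m v => // v; rewrite cnorm0v ltxx. Qed.

Lemma res_lb m t : K0^-1 * c1 <= nrm (resid Xs Ys (beta m) t).
Proof.
rewrite nrm_resid_scale ler_pM2l ?invr_gt0 ?K0pos //.
by rewrite -cnorm_resid; apply: hyp.
Qed.

Lemma res_pos m t : 0 < nrm (resid Xs Ys (beta m) t).
Proof. apply: lt_le_trans (res_lb m t); by rewrite mulr_gt0 ?invr_gt0 ?K0pos. Qed.

Lemma n_pos t : (0 < n t)%N.
Proof.
apply: (@cnorm_pos_dim _ (X t *m col t (beta 0) - Y t)).
exact: lt_le_trans c1pos (hyp t 0).
Qed.

Lemma n0_pos : (0 < n0 n)%N.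
Proof.
rewrite /n0; elim/big_ind: _ => //.
- rewrite /nmax (leq_trans (n_pos (Ordinal kpos))) //.
  by rewrite (bigD1 (Ordinal kpos)) //= leq_maxl.
- by move=> x y hx hy; rewrite leq_min hx hy.
- by move=> t _; apply: n_pos.
Qed.

Lemma s_pos : 0 < s.
Proof. by rewrite sqrtr_gt0 ltr0n n0_pos. Qed.

Lemma objF_scale B : objF X Y lam B = K0 * G B.
Proof.
have K0n : K0 != 0 by rewrite gt_eqF // K0pos.
rewrite /G /objF.
have -> : \sum_t cnorm (Ys t - Xs t *m col t B) = K0^-1 * \sum_t cnorm (Y t - X t *m col t B).
  rewrite mulr_sumr; apply: eq_bigr => t _.
  rewrite /Ys /Xs -scalemxAl -scalerBr cnorm_scale ger0_norm //.
  by rewrite invr_ge0 ltW // K0pos.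
rewrite /lams; field.
by rewrite K0n gt_eqF // s_pos.
Qed.

Definition Am m := Acoef Xs Ys (beta m).
Definition Amax := k%:R * (s * (K0^-1 * c1))^-1.

Lemma Am_bound m : Am m <= Amax.
Proof.
rewrite /Am /Acoef /Amax.
have -> : k%:R * (s * (K0^-1 * c1))^-1 = \sum_(t < k) (s * (K0^-1 * c1))^-1.
  by rewrite sumr_const card_ord mulr_natl.
apply: ler_sum => t _; rewrite rden_resid -/s.
rewrite lef_pV2 ?posrE ?mulr_gt0 ?s_pos ?invr_gt0 ?K0pos ?res_pos //.
by rewrite ler_pM2l ?s_pos ?res_lb.
Qed.

Lemma Amax_pos : 0 < Amax.
Proof. by rewrite /Amax mulr_gt0 ?ltr0n ?invr_gt0 ?mulr_gt0 ?s_pos ?invr_gt0 ?K0pos. Qed.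

Lemma Am_pos m : 0 < Am m.
Proof.
rewrite /Am /Acoef (bigD1 (Ordinal kpos)) //= ltr_wpDr ?invr_gt0 //.
  by apply: sumr_ge0 => t _; rewrite invr_ge0 rden_resid mulr_ge0 ?sqrtr_ge0 ?nrm_ge0.
by rewrite rden_resid mulr_gt0 ?s_pos ?res_pos.
Qed.

Definition Ed (Z : 'M[R]_(p, k)) m := \sum_t \sum_l (Z l t - beta m l t) ^+ 2.

Lemma Ed_ge0 Z m : 0 <= Ed Z m.
Proof. by apply: sumr_ge0 => t _; apply: sumr_ge0 => l _; apply: sqr_ge0. Qed.

Lemma key m Z : G (beta m.+1) + Am m / 2 * Ed Z m.+1 <= G Z + Am m / 2 * Ed Z m.
Proof.
rewrite beta_S /Ed beta_S /G /Am.
apply: key_ineq => //.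
- by apply: s_pos.
- by rewrite ltW // lams_pos.
- by apply: hXs.
- by move=> t; apply: res_pos.
Qed.

Lemma Gdec m : G (beta m.+1) <= G (beta m).
Proof.
have := key m (beta m).
have -> : Ed (beta m) m = 0.
  by rewrite /Ed big1 // => t _; rewrite big1 // => l _; rewrite subrr expr0n.
rewrite mulr0 addr0 => h; apply: le_trans h.
by rewrite lerDl mulr_ge0 ?Ed_ge0 // divr_ge0 // ltW // Am_pos.
Qed.

Lemma Gmono N m : (N <= m)%N -> G (beta m) <= G (beta N).
Proof.
elim: m => [|m IH]; first by rewrite leqn0 => /eqP ->.
rewrite leq_eqVlt => /orP [/eqP -> //|]; rewrite ltnS => hN.
exact: le_trans (Gdec m) (IH hN).
Qed.

Lemma G_ge_h B : lams * \sum_l rnorm (row l B) <= G B.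
Proof.
rewrite /G /objF lerDr mulr_ge0 ?invr_ge0 ?sqrtr_ge0 //.
by apply: sumr_ge0 => t _; apply: sqrtr_ge0.
Qed.

Definition Mb := G B0 / lams.

Lemma bounded m l t : `|beta m l t| <= Mb.
Proof.
have hl := lams_pos.
rewrite /Mb ler_pdivlMr // mulrC.
apply: le_trans (Gmono (leq0n m)).
apply: le_trans (G_ge_h _).
rewrite ler_pM2l //.
apply: le_trans (_ : rnorm (row l (beta m)) <= _).
  by have := nrm_entry (fun j => row l (beta m) 0 j) t; rewrite mxE.
rewrite (bigD1 l) //= lerDl; apply: sumr_ge0 => l' _; apply: sqrtr_ge0.
Qed.

Lemma approach Z e : 0 < e -> exists N, forall m, (N <= m)%N -> G (beta m) <= G Z + e.
Proof.
move=> e0.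
suff [N hN] : exists N, G (beta N) <= G Z + e.
  by exists N => m hm; apply: le_trans (Gmono hm) hN.
apply: contrapT => hno.
have hall m : G Z + e < G (beta m).
  by rewrite ltNge; apply/negP => h; apply: hno; exists m.
set d := 2 * e / Amax.
have d0 : 0 < d by apply: divr_gt0; [apply: mulr_gt0 | apply: Amax_pos].
have step m : Ed Z m.+1 <= Ed Z m - d.
  have hk := key m Z; have hm := hall m.+1.
  have Ap := Am_pos m; have Ab := Am_bound m.
  have h1 : Am m / 2 * (Ed Z m.+1 - Ed Z m) <= - e.
    set a := Am m / 2 * Ed Z m.+1 in hk *; set b := Am m / 2 * Ed Z m in hk *.
    rewrite mulrBr -/a -/b; lra.
  have h2 : Ed Z m.+1 - Ed Z m <= - (2 * e / Am m).
    rewrite -(ler_pM2l (x := Am m / 2)) ?divr_gt0 //.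
    apply: le_trans h1 _; rewrite le_eqVlt; apply/orP; left; apply/eqP.
    by field; rewrite gt_eqF.
  have h3 : d <= 2 * e / Am m.
    rewrite /d ler_pM2l ?mulr_gt0 //.
    by rewrite lef_pV2 ?posrE ?Amax_pos.
  lra.
have hind m : Ed Z m <= Ed Z 0 - m%:R * d.
  elim: m => [|m IH]; first by rewrite mul0r subr0.
  apply: le_trans (step m) _; rewrite -natr1; lra.
set M := Num.Def.archi_bound (Ed Z 0 / d).
have hM : Ed Z 0 / d < M%:R by apply: archi_boundP; rewrite divr_ge0 ?Ed_ge0 // ltW.
have hM' : Ed Z 0 < M%:R * d by rewrite -ltr_pdivrMr.
have := hind M; have := Ed_ge0 Z M; lra.
Qed.

Definition Cc := s^-1 * (k%:R * (p%:R + 1)) + lams * (p%:R * (k%:R + 1)).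

Lemma Cc_ge0 : 0 <= Cc.
Proof.
have la : 0 <= lams by rewrite ltW // lams_pos.
apply: addr_ge0; apply: mulr_ge0 => //; rewrite ?invr_ge0 ?sqrtr_ge0 //;
  apply: mulr_ge0 => //; apply: addr_ge0.
Qed.

Lemma cont (Bs B : 'M[R]_(p, k)) d : 0 <= d ->
  (forall l t, `|Bs l t - B l t| <= d) -> G Bs <= G B + Cc * d.
Proof.
move=> d0 hd.
have hc t : cnorm (Ys t - Xs t *m col t Bs) <= cnorm (Ys t - Xs t *m col t B) + (p%:R + 1) * d.
  rewrite (cnorm_Z Xs Ys B Bs t).
  apply: le_trans (nrm_triangle _ _) _.
  have -> : nrm (resid Xs Ys B t) = cnorm (Ys t - Xs t *m col t B).
    by rewrite -cnorm_resid -cnorm_opp opprB.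
  rewrite lerD2l.
  have hdn : nrm (fun l => Bs l t - B l t) <= (p%:R + 1) * d.
    by have := @nrm_bound _ _ (fun l => Bs l t - B l t) d d0 (fun l => hd l t); rewrite card_ord.
  apply: le_trans hdn.
  apply: sq_le_nonneg; first exact: nrm_ge0.
  rewrite !nrm_sq; apply: le_trans (lin_bound (Xs t) (fun l => Bs l t - B l t)) _.
  rewrite ler_piMl ?hXs //; by apply: sumr_ge0 => l _; apply: sqr_ge0.
have hr l : rnorm (row l Bs) <= rnorm (row l B) + (k%:R + 1) * d.
  have -> : rnorm (row l Bs) = nrm (fun j => B l j + (Bs l j - B l j)).
    by rewrite rnormE; congr Num.sqrt; apply: eq_bigr => j _; rewrite mxE; congr (_ ^+ 2); ring.
  apply: le_trans (nrm_triangle _ _) _.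
  rewrite rnormE (_ : (fun j => row l B 0 j) = (fun j => B l j)); last first.
    by apply: funext => j; rewrite mxE.
  rewrite lerD2l.
  by have := @nrm_bound _ _ (fun j => Bs l j - B l j) d d0 (fun j => hd l j); rewrite card_ord.
have sc : \sum_t cnorm (Ys t - Xs t *m col t Bs) <=
          \sum_t cnorm (Ys t - Xs t *m col t B) + k%:R * ((p%:R + 1) * d).
  apply: le_trans (ler_sum _ (fun t _ => hc t)) _.
  by rewrite big_split /= sumr_const card_ord mulr_natl.
have sr : \sum_l rnorm (row l Bs) <= \sum_l rnorm (row l B) + p%:R * ((k%:R + 1) * d).
  apply: le_trans (ler_sum _ (fun l _ => hr l)) _.
  by rewrite big_split /= sumr_const card_ord mulr_natl.
have si : 0 <= s^-1 by rewrite invr_ge0 sqrtr_ge0.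
have la : 0 <= lams by rewrite ltW // lams_pos.
have sc' := ler_wpM2l si sc; have sr' := ler_wpM2l la sr.
rewrite /G /objF -/s /Cc.
set a1 := \sum_t cnorm (Ys t - Xs t *m col t Bs) in sc' *.
set a2 := \sum_t cnorm (Ys t - Xs t *m col t B) in sc' *.
set b1 := \sum_l rnorm (row l Bs) in sr' *.
set b2 := \sum_l rnorm (row l B) in sr' *.
rewrite !mulrDr in sc' sr'.
have e1 : s^-1 * (k%:R * (p%:R + 1)) * d = s^-1 * (k%:R * ((p%:R + 1) * d)) by ring.
have e2 : lams * (p%:R * (k%:R + 1)) * d = lams * (p%:R * ((k%:R + 1) * d)) by ring.
rewrite mulrDl e1 e2; lra.
Qed.

Lemma cluster_pt : exists Bs : 'M[R]_(p, k), forall (d : R) N, 0 < d ->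
  exists m, (N <= m)%N /\ forall l t, `|Bs l t - beta m l t| < d.
Proof.
pose v m := mxvec (beta m).
pose K := [set w : 'rV[R]_(p * k) | forall i, `[- Mb, Mb]%classic (w ord0 i)].
have Kc : compact K.
  by apply: (@rV_compact _ _ (fun _ => `[- Mb, Mb]%classic)) => _; apply: segment_compact.
have FK : (v @ \oo) K.
  exists 0%N => // m _ i; rewrite /v; case/mxvec_indexP: i => l t.
  rewrite mxvecE /= in_itv /= -ler_norml; exact: bounded.
have [c [Kc' clc]] := Kc _ _ FK.
exists (vec_mx c) => d N d0.
pose A := [set w : 'rV[R]_(p * k) | exists2 m, (N <= m)%N & w = v m].
pose Bn := [set w : 'rV[R]_(p * k) | forall j, `|c 0 j - w 0 j| < d].
have FA : (v @ \oo) A by exists N => // m /= hm; exists m.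
have nB : nbhs c Bn.
  apply/nbhs_ballP; exists d => // w hw j.
  by move: hw => [_ /(_ 0 j)]; rewrite -ball_normE.
have [w [[m hm ->] hB]] := clc A Bn FA nB.
exists m; split => // l t.
have := hB (mxvec_index l t).
by rewrite /v !mxvecE -{1}(vec_mxK c) mxvecE.
Qed.

Lemma main_conv : exists Bs : 'M[R]_(p, k),
  (forall B, objF X Y lam Bs <= objF X Y lam B) /\
  (forall i j, (fun m => beta m i j) @ \oo --> Bs i j).
Proof.
have [Bs hBs] := cluster_pt.
have Gmin Z : G Bs <= G Z.
  apply: eps_le => e e0.
  have e2 : 0 < e / 2 by rewrite divr_gt0.
  have [N hN] := approach Z e2.
  have C0 := Cc_ge0.
  set d := e / 2 / (Cc + 1).
  have d0 : 0 < d by rewrite divr_gt0 // ltr_pwDr.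
  have [m [hm hd]] := hBs d N d0.
  have hc := cont (ltW d0) (fun l t => ltW (hd l t)).
  have hg := hN m hm.
  have hCd : Cc * d <= e / 2.
    rewrite /d mulrCA ler_piMr ?ltW //.
    by rewrite ltr_pdivrMr ?mul1r ?ltrDl // ltr_pwDr.
  lra.
exists Bs; split.
  move=> B; rewrite !objF_scale ler_pM2l ?K0pos //.
have fej m : Ed Bs m.+1 <= Ed Bs m.
  have := key m Bs; have := Gmin (beta m.+1); have := Am_pos m => Ap.
  move=> h1 h2.
  have : Am m / 2 * Ed Bs m.+1 <= Am m / 2 * Ed Bs m.
    set a := Am m / 2 * Ed Bs m.+1 in h2 *; set b := Am m / 2 * Ed Bs m in h2 *; lra.
  by rewrite ler_pM2l ?divr_gt0.
have fejN m0 m : (m0 <= m)%N -> Ed Bs m <= Ed Bs m0.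
  elim: m => [|m IH]; first by rewrite leqn0 => /eqP ->.
  rewrite leq_eqVlt => /orP [/eqP -> //|]; rewrite ltnS => hN.
  exact: le_trans (fej m) (IH hN).
move=> i j; apply/cvgrPdist_lt => e e0.
set P : R := (k * p)%:R.
have P0 : 0 <= P by [].
set d := e / (P + 1).
have d0 : 0 < d by rewrite divr_gt0 // ltr_pwDr.
have [m0 [_ hd]] := hBs d 0%N d0.
have E0 : Ed Bs m0 < e ^+ 2.
  have : Ed Bs m0 <= P * d ^+ 2.
    rewrite /Ed /P.
    have -> : ((k * p)%:R : R) * d ^+ 2 = \sum_(t < k) \sum_(l < p) d ^+ 2.
      rewrite (eq_bigr (fun _ => d ^+ 2 *+ p)); last by move=> t _; rewrite sumr_const card_ord.
      by rewrite sumr_const card_ord -mulrnA mulnC mulr_natl.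
    apply: ler_sum => t _; apply: ler_sum => l _.
    rewrite -real_normK ?num_real // lerXn2r ?nnegrE ?normr_ge0 ?ltW //.
  have ed : e = d * (P + 1) by rewrite /d divfK // gt_eqF // ltr_pwDr.
  rewrite ed => h; apply: le_lt_trans h _.
  have dd : 0 < d ^+ 2 by rewrite exprn_gt0.
  nra.
exists m0 => // m /= hm.
have hE := le_lt_trans (fejN _ _ hm) E0.
have hsq : (Bs i j - beta m i j) ^+ 2 <= Ed Bs m.
  rewrite /Ed (bigD1 j) //= (bigD1 i) //= -addrA lerDl.
  apply: addr_ge0; first by apply: sumr_ge0 => l _; apply: sqr_ge0.
  by apply: sumr_ge0 => t _; apply: sumr_ge0 => l _; apply: sqr_ge0.
rewrite ltNge; apply/negP => hge.
have := real_normK (num_real (Bs i j - beta m i j)).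
set x := `|Bs i j - beta m i j|; move=> hx.
have h2 : e * e <= x * x by apply: ler_pM => //; apply: ltW.
rewrite -!expr2 hx in h2.
set y := (Bs i j - beta m i j) ^+ 2 in h2 hsq.
lra.
Qed.

End Main.


Unset Implicit Arguments.
Set Strict Implicit.

Theorem theorem6 (R : realType) (k p : nat) (n : 'I_k -> nat)
  (X : forall t : 'I_k, 'M[R]_(n t, p)) (Y : forall t : 'I_k, 'cV[R]_(n t))
  (lam : R) (B0 : 'M[R]_(p, k)) (c0 : R) :
  0 < lam -> 0 < c0 ->
  exists Kstar : R, forall K0 : R, 0 < K0 -> Kstar <= K0 ->
    (* min_t inf_{zeta in A^t} ||X^(t) zeta - Y^(t)|| > c0 *)
    (exists c1 : R, c0 < c1 /\
       forall (t : 'I_k) (m : nat) (v : R), 0 <= v <= 1 ->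
         c1 <= cnorm (X t *m (v *: col t (scaled_iterates X Y lam K0 B0 m)
                         + (1 - v) *: col t (scaled_iterates X Y lam K0 B0 m.+1))
                      - Y t)) ->
    exists Bstar : 'M[R]_(p, k),
      (forall B : 'M[R]_(p, k), objF X Y lam Bstar <= objF X Y lam B) /\
      (forall (i : 'I_p) (j : 'I_k),
         (fun m => scaled_iterates X Y lam K0 B0 m i j) @ \oo --> Bstar i j).
Proof.
move=> lam0 c00.
have [k0|kpos] := posnP k.
  subst k; exists 0 => K0 _ _ _; exists B0; split.
    by move=> B; rewrite (thinmx0 B) (thinmx0 B0).
  by move=> i [j hj].
set S := \sum_t \sum_i \sum_l X t i l ^+ 2.
have S0 : 0 <= S.
  by apply: sumr_ge0 => t _; apply: sumr_ge0 => i _; apply: sumr_ge0 => l _; apply: sqr_ge0.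
exists (1 + S) => K0 K0pos hKs [c1 [c0c1 hyp]].
apply: (@main_conv R k p n X Y lam K0 c1 B0 kpos lam0).
- by apply: le_trans hKs; rewrite lerDl.
- by apply: le_trans hKs; rewrite lerDr.
- exact: lt_trans c00 c0c1.
- move=> t m; have := hyp t m 1; rewrite ler01 lexx scale1r subrr scale0r addr0.
  by apply.
Qed.
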